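(* Let $A$ be a unital associative ring, $I\subset A$ a two-sided ideal, $p$ a prime and $v$ a positive integer. For every pseudo-free left $\{I^m\}$-module $\{P_m\}$ there exists both a special augmented complex and a $p^v$-special augmented complex over $\{P_m\}$.
   Context: A left $\{I^m\}$-module $\{M_m\}_{m\geqslant1}$ is a pro-abelian group (transition maps $\lambda_{k,m}$, $k\geqslant m$) with each $M_m$ a left module over the non-unital ring $I^m$ and $\lambda_{k,m}(ax)=a\lambda_{k,m}(x)$ for $a\in I^k$. Homomorphisms are families of $I^m$-linear maps commuting with transition maps. $\{P_m\}$ is pseudo-free if there are $I^m$-isomorphisms $\varphi_m\colon I^m\otimes L_m\to P_m$, $L_m$ free abelian, and maps $\sigma_{k,m}\colon L_k\to L_m$ with $\lambda_{k,m}\varphi_k=\varphi_m(\iota\otimes\sigma_{k,m})$. A homomorphism $f$ from pseudo-free $\{P_m\}$ is special if there are maps $g_m\colon L_m\to M_m$ compatible with $\sigma,\lambda$ such that $f_m\varphi_m(a\otimes x)=a g_m(x)$; it is $p^v$-special if $\{P_m\}=\{P'_m\}\oplus\{P''_m\}$ (strict direct sum) with both summands pseudo-free, $f$ restricted to $\{P'_m\}$ special, and $f$ restricted to $\{P''_m\}$ equal to $p^v g$ for some homomorphism $g\colon\{P''_m\}\to\{M_m\}$. An augmented complex over $\{P_m\}$ is a sequence of homomorphisms $\cdots\to\{C_{m,1}\}\xrightarrow{d}\{C_{m,0}\}\xrightarrow{\epsilon}\{P_m\}$ with $d_md_m=0$ and $\epsilon_md_m=0$. It is special if all $\{C_{m,q}\}$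 are pseudo-free, $\epsilon$ is special, and the homology of each augmented complex $C_{m,*}\to P_m$ (including in the degree of $P_m$) is annihilated by $I^m$; it is $p^v$-special if all $\{C_{m,q}\}$ are pseudo-free, $\epsilon$ is $p^v$-special, and that homology is annihilated by $I^m$ and by $p^v$. *)

(* Defs.v *)
From HB Require Import structures.
From mathcomp Require Import all_boot all_order all_algebra.
Set Implicit Arguments. Unset Strict Implicit. Unset Printing Implicit Defensive.
Import GRing.Theory.
Local Open Scope ring_scope.

Section Defs.
Variable A : pzRingType.

Definition two_sided_ideal (I : A -> Prop) : Prop :=
  [/\ I 0, (forall x y, I x -> I y -> I (x + y)), (forall x, I x -> I (- x)),
      (forall r x, I x -> I (r * x)) & (forall r x, I x -> I (x * r))].

(* I^m : the additive subgroup of A generated by the products a_1 ... a_m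
   with all a_i in I (used only for m >= 1). *)
Inductive Ipow (I : A -> Prop) (m : nat) : A -> Prop :=
  | Ipow_prod (s : seq A) : size s = m -> (forall a, a \in s -> I a) ->
      Ipow I m (\prod_(a <- s) a)
  | Ipow_0 : Ipow I m 0
  | Ipow_D x y : Ipow I m x -> Ipow I m y -> Ipow I m (x + y)
  | Ipow_N x : Ipow I m x -> Ipow I m (- x).

Definition additive_map (U V : zmodType) (f : U -> V) : Prop :=
  forall x y, f (x + y) = f x + f y.

(* Data of a family {M_m} with transition maps and actions; only indices
   m >= 1 are relevant (index 0 is ignored by all axioms). *)
Record promod := Promod {
  pobj : nat -> zmodType;
  ptr : forall k m, pobj k -> pobj m;     (* lambda_{k,m}, used for k >= m *)
  pact : forall m, A -> pobj m -> pobj m  (* action, used for a in I^m *)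
}.
Arguments pobj p m : clear implicits.
Arguments ptr p k m _ : clear implicits.
Arguments pact p m _ _ : clear implicits.

Definition is_promod (I : A -> Prop) (M : promod) : Prop :=
  [/\ (forall k m, (0 < m)%N -> (m <= k)%N -> additive_map (ptr M k m)),
      (forall m x, (0 < m)%N -> ptr M m m x = x),
      (forall l k m x, (0 < m)%N -> (m <= k)%N -> (k <= l)%N ->
          ptr M k m (ptr M l k x) = ptr M l m x),
      (forall m a b x y, (0 < m)%N -> Ipow I m a -> Ipow I m b ->
          [/\ pact M m a (x + y) = pact M m a x + pact M m a y,
              pact M m (a + b) x = pact M m a x + pact M m b x &
              pact M m (a * b) x = pact M m a (pact M m b x)]) &
      (forall k m a x, (0 < m)%N -> (m <= k)%N -> Ipow I k a ->
          ptr M k m (pact M k a x) = pact M m a (ptr M k m x))].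

Definition is_hom (I : A -> Prop) (M N : promod)
    (f : forall m, pobj M m -> pobj N m) : Prop :=
  [/\ (forall m, (0 < m)%N -> additive_map (f m)),
      (forall m a x, (0 < m)%N -> Ipow I m a -> f m (pact M m a x) = pact N m a (f m x)) &
      (forall k m x, (0 < m)%N -> (m <= k)%N -> ptr N k m (f k x) = f m (ptr M k m x))].

Definition free_abelian (L : zmodType) : Prop :=
  exists (B : eqType) (e : B -> L),
    (forall x : L, exists (s : seq B) (c : B -> int),
        x = \sum_(b <- s) e b *~ c b) /\
    (forall (s : seq B) (c : B -> int), uniq s ->
        \sum_(b <- s) e b *~ c b = 0 -> forall b, b \in s -> c b = 0).

Definition biadditive (J : A -> Prop) (L N : zmodType) (h : A -> L -> N) : Prop :=
  (forall a b x, J a -> J b -> h (a + b) x = h a x + h b x) /\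
  (forall a x y, J a -> h a (x + y) = h a x + h a y).

(* (P, beta) is a tensor product J (x)_Z L, beta a x = phi (a (x) x),
   i.e. beta induces an isomorphism J (x) L -> P (universal property). *)
Definition is_tensor (J : A -> Prop) (L P : zmodType) (beta : A -> L -> P) : Prop :=
  biadditive J beta /\
  forall (N : zmodType) (h : A -> L -> N), biadditive J h ->
    (exists phi : P -> N, additive_map phi /\
        forall a x, J a -> phi (beta a x) = h a x) /\
    (forall phi1 phi2 : P -> N, additive_map phi1 -> additive_map phi2 ->
        (forall a x, J a -> phi1 (beta a x) = phi2 (beta a x)) ->
        forall y, phi1 y = phi2 y).

(* pseudo-free structure: L_m, phi_m (through beta_m a x = phi_m (a (x) x)),
   sigma_{k,m} *)
Record pfstruct (M : promod) := PFStruct {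
  pfL : nat -> zmodType;
  pfbeta : forall m, A -> pfL m -> pobj M m;
  pfsigma : forall k m, pfL k -> pfL m
}.
Arguments pfL {M} p m.
Arguments pfbeta {M} p m _ _.
Arguments pfsigma {M} p k m _.

Definition is_pfstruct (I : A -> Prop) (M : promod) (S : pfstruct M) : Prop :=
  forall m, (0 < m)%N ->
  [/\ free_abelian (pfL S m),
      is_tensor (Ipow I m) (pfbeta S m),
      (forall a b x, Ipow I m a -> Ipow I m b ->
          pact M m a (pfbeta S m b x) = pfbeta S m (a * b) x),
      (forall k, (m <= k)%N -> additive_map (pfsigma S k m)) &
      (forall k a x, (m <= k)%N -> Ipow I k a ->
          ptr M k m (pfbeta S k a x) = pfbeta S m a (pfsigma S k m x))].

Definition pseudo_free (I : A -> Prop) (M : promod) : Prop :=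
  exists S : pfstruct M, is_pfstruct I S.

Definition special (I : A -> Prop) (M N : promod) (S : pfstruct M)
    (f : forall m, pobj M m -> pobj N m) : Prop :=
  exists g : forall m, pfL S m -> pobj N m,
  [/\ (forall m, (0 < m)%N -> additive_map (g m)),
      (forall k m x, (0 < m)%N -> (m <= k)%N ->
          ptr N k m (g k x) = g m (pfsigma S k m x)) &
      (forall m a x, (0 < m)%N -> Ipow I m a ->
          f m (pfbeta S m a x) = pact N m a (g m x))].

(* p^v-special homomorphism (n = p^v): strict direct sum decomposition
   M = M' (+) M'' (given by homomorphisms i', i'' whose sum is a levelwise
   bijection) into pseudo-free summands, f special on M', n * g on M''. *)
Definition pv_special (I : A -> Prop) (n : nat) (M N : promod)
    (f : forall m, pobj M m -> pobj N m) : Prop :=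
  exists (M' M'' : promod) (i' : forall m, pobj M' m -> pobj M m)
         (i'' : forall m, pobj M'' m -> pobj M m)
         (S' : pfstruct M') (S'' : pfstruct M''),
  [/\ [/\ is_promod I M', is_promod I M'', is_hom I i' & is_hom I i''],
      (forall m, (0 < m)%N ->
         bijective (fun xy : pobj M' m * pobj M'' m => i' m xy.1 + i'' m xy.2)),
      is_pfstruct I S' /\ is_pfstruct I S'',
      special I S' (fun m x => f m (i' m x)) &
      exists g : forall m, pobj M'' m -> pobj N m,
        is_hom I g /\ forall m x, (0 < m)%N -> f m (i'' m x) = g m x *+ n].

(* augmented complex  ... -> C_1 -d_0-> C_0 -eps-> P ;
   d q : C_{q+1} -> C_q *)
Definition aug_complex (I : A -> Prop) (P : promod) (C : nat -> promod)
    (d : forall q m, pobj (C q.+1) m -> pobj (C q) m)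
    (eps : forall m, pobj (C 0%N) m -> pobj P m) : Prop :=
  [/\ (forall q, is_promod I (C q)), (forall q, is_hom I (d q)), is_hom I eps,
      (forall q m x, (0 < m)%N -> d q m (d q.+1 m x) = 0) &
      (forall m x, (0 < m)%N -> eps m (d 0%N m x) = 0)].

(* every element of the homology of C_{m,*} -> P_m (including the degree of
   P_m) is killed by the operator T *)
Definition homology_killed_by (P : promod) (C : nat -> promod)
    (d : forall q m, pobj (C q.+1) m -> pobj (C q) m)
    (eps : forall m, pobj (C 0%N) m -> pobj P m)
    (T : forall (M : promod) m, pobj M m -> pobj M m -> Prop) (m : nat) : Prop :=
  [/\ (forall y, exists x, T P m y (eps m x)),
      (forall x, eps m x = 0 -> exists z, T (C 0%N) m x (d 0%N m z)) &
      (forall q x, d q m x = 0 -> exists z, T (C q.+1) m x (d q.+1 m z))].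

(* T x y : "a x = y" for a given a in I^m, resp. "p^v x = y" *)
Definition special_complex (I : A -> Prop) (P : promod) : Prop :=
  exists (C : nat -> promod) (d : forall q m, pobj (C q.+1) m -> pobj (C q) m)
         (eps : forall m, pobj (C 0%N) m -> pobj P m)
         (SC : forall q, pfstruct (C q)),
  [/\ aug_complex I d eps,
      (forall q, is_pfstruct I (SC q)),
      special I (SC 0%N) eps &
      (forall m, (0 < m)%N -> forall a, Ipow I m a ->
         homology_killed_by d eps (fun M m x y => pact M m a x = y) m)].

Definition pv_special_complex (I : A -> Prop) (n : nat) (P : promod) : Prop :=
  exists (C : nat -> promod) (d : forall q m, pobj (C q.+1) m -> pobj (C q) m)
         (eps : forall m, pobj (C 0%N) m -> pobj P m),
  [/\ aug_complex I d eps,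
      (forall q, pseudo_free I (C q)),
      pv_special I n eps &
      (forall m, (0 < m)%N ->
         (forall a, Ipow I m a ->
            homology_killed_by d eps (fun M m x y => pact M m a x = y) m) /\
         homology_killed_by d eps (fun M m x y => x *+ n = y) m)].
End Defs.

(* Main.v *)
Require Import Defs.
From HB Require Import structures.
From mathcomp Require Import all_boot all_order all_algebra.
From mathcomp Require Import finmap.
From mathcomp Require Import boolp.
From mathcomp.multinomials Require Import monalg.
Unset Printing Implicit Defensive.
Import GRing.Theory.
Local Open Scope ring_scope.

Set Implicit Arguments. Unset Strict Implicit.

Lemma add_id0 (V : zmodType) (x : V) : x + x = x -> x = 0.
Proof. by move/(congr1 (fun y => y - x)); rewrite addrK subrr. Qed.

Section AM.
Variables (U V : zmodType) (f : U -> V) (hf : additive_map f).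
Lemma am0 : f 0 = 0. Proof. by apply: add_id0; rewrite -hf addr0. Qed.
Lemma amN x : f (- x) = - f x.
Proof. by apply/eqP; rewrite -subr_eq0 opprK -hf addNr am0. Qed.
Lemma am_sum (I0 : Type) (r : seq I0) (F : I0 -> U) :
  f (\sum_(i <- r) F i) = \sum_(i <- r) f (F i).
Proof. by apply: (big_morph f hf am0). Qed.
Lemma amMn x n : f (x *+ n) = f x *+ n.
Proof. by elim: n => [|n IH]; rewrite ?mulr0n ?am0 // !mulrS hf IH. Qed.
Lemma amMz x z : f (x *~ z) = f x *~ z.
Proof. by case: z => n; rewrite ?NegzE ?mulrNz ?amN amMn. Qed.
End AM.

Section MLift.
Variables (K : choiceType) (G N : zmodType).
Definition mlift (F : K -> G -> N) (g : {malg G[K]}) : N :=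
  \sum_(k <- msupp g) F k g@_k.

Lemma mliftEw F g (D : {fset K}) : (forall k, F k 0 = 0) -> (msupp g `<=` D)%fset ->
  mlift F g = \sum_(k <- D) F k g@_k.
Proof.
move=> F0 le; rewrite /mlift (big_fset_incl _ le) // => k _ /mcoeff_outdom ->.
exact: F0.
Qed.

Lemma mliftD F : (forall k, additive_map (F k)) ->
  additive_map (mlift F).
Proof.
move=> hF g1 g2.
have F0 k : F k 0 = 0 by apply: am0.
rewrite !(@mliftEw _ _ (msupp g1 `|` msupp g2)%fset) ?fsubsetUl ?fsubsetUr ?msuppD_le //.
by rewrite -big_split /=; apply: eq_bigr => k _; rewrite mcoeffD hF.
Qed.

Lemma mliftU F k c : F k 0 = 0 -> mlift F << c *g k >> = F k c.
Proof.
move=> F0; rewrite /mlift msuppU; case: eqP => [->|_].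
  by rewrite big_seq_fset0.
by rewrite big_seq_fset1 mcoeffUU.
Qed.

Lemma mlift0 F : mlift F 0 = 0.
Proof. by rewrite /mlift msupp0 big_seq_fset0. Qed.

Lemma mlift_addF F F' g :
  mlift (fun k c => F k c + F' k c) g = mlift F g + mlift F' g.
Proof. by rewrite /mlift big_split. Qed.

Lemma mlift_eq F F' g : (forall k c, F k c = F' k c) -> mlift F g = mlift F' g.
Proof. by move=> h; apply: eq_bigr => k _; apply: h. Qed.
End MLift.

Section MLift2.
Variables (K : choiceType) (G N N' : zmodType).
Lemma mlift_comp (Phi : N -> N') (F : K -> G -> N) g : additive_map Phi ->
  Phi (mlift F g) = mlift (fun k c => Phi (F k c)) g.
Proof. by move=> h; rewrite /mlift (am_sum h). Qed.

Lemma mlift_id (g : {malg G[K]}) : mlift (fun k c => << c *g k >>) g = g.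
Proof. by rewrite /mlift -monalgE. Qed.
End MLift2.
Lemma am_decomp (K : choiceType) (G N : zmodType) (Phi : {malg G[K]} -> N) g : additive_map Phi ->
  Phi g = mlift (fun k c => Phi << c *g k >>) g.
Proof. by move=> h; rewrite -(mlift_comp _ _ h) mlift_id. Qed.

Notation PTR M k m := (@ptr _ M k m).
Notation PACT M m := (@pact _ M m).
Notation PFB S m := (@pfbeta _ _ S m).
Notation PFS S k m := (@pfsigma _ _ S k m).

Set Implicit Arguments. Unset Strict Implicit.

Section IpowL.
Variables (A : pzRingType) (I : A -> Prop) (hI : two_sided_ideal I).

Lemma Ipow_mull m r x : (0 < m)%N -> Ipow I m x -> Ipow I m (r * x).
Proof.
move=> m0; elim=> [s sz sI | | x1 y1 _ h1 _ h2 | x1 _ h1].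
- case: s sz sI => [|a s] /= sz sI; first by rewrite -sz in m0.
  rewrite big_cons mulrA.
  have -> : r * a * \prod_(b <- s) b = \prod_(b <- (r * a) :: s) b by rewrite big_cons.
  apply: Ipow_prod => // b; rewrite inE => /orP [/eqP ->|bs].
    case: hI => _ _ _ h _; apply: h; apply: sI; exact: mem_head.
  by apply: sI; rewrite inE bs orbT.
- rewrite mulr0; exact: Ipow_0.
- rewrite mulrDr; exact: Ipow_D.
- rewrite mulrN; exact: Ipow_N.
Qed.

Lemma Ipow_step k x : (0 < k)%N -> Ipow I k.+1 x -> Ipow I k x.
Proof.
move=> k0; elim=> [s sz sI | | x1 y1 _ h1 _ h2 | x1 _ h1].
- case: s sz sI => [|a [|b s]] sz sI; [by [] | by case: sz => sz; rewrite -sz in k0 | ].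
  rewrite !big_cons mulrA.
  have -> : a * b * \prod_(c <- s) c = \prod_(c <- (a * b) :: s) c by rewrite big_cons.
  apply: Ipow_prod; first by case: sz.
  move=> c; rewrite inE => /orP [/eqP ->|cs].
    case: hI => _ _ _ _ h; apply: h; apply: sI; exact: mem_head.
  by apply: sI; rewrite !inE cs !orbT.
- exact: Ipow_0.
- exact: Ipow_D.
- exact: Ipow_N.
Qed.

Lemma Ipow_mono k m x : (0 < m)%N -> (m <= k)%N -> Ipow I k x -> Ipow I m x.
Proof.
move=> m0; elim: k => [|k IH] mk h; first by rewrite leqn0 in mk; rewrite (eqP mk) in m0.
case: (ltngtP m k.+1) mk => // [mk _|-> //].
apply: IH => //; apply: Ipow_step => //; exact: leq_trans m0 mk.
Qed.

Lemma Ipow_Mn m a n : Ipow I m a -> Ipow I m (a *+ n).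
Proof.
move=> h; elim: n => [|n IH]; first by rewrite mulr0n; exact: Ipow_0.
by rewrite mulrS; apply: Ipow_D.
Qed.

Lemma Ipow_Mz m a z : Ipow I m a -> Ipow I m (a *~ z).
Proof.
move=> h; case: z => n; first exact: Ipow_Mn.
rewrite NegzE mulrNz; apply: Ipow_N; exact: Ipow_Mn.
Qed.

Lemma Ipow_mul m a b : (0 < m)%N -> Ipow I m b -> Ipow I m (a * b).
Proof. exact: Ipow_mull. Qed.
End IpowL.

Section JDef.
Variables (A : pzRingType) (I : A -> Prop).

Definition Jp (m : nat) (a : A) : Prop := Ipow I m a /\ (m = 0%N -> a = 0).

Definition Jt (m : nat) : Type := {a : A | Jp m a}.
HB.instance Definition _ m := gen_eqMixin (Jt m).
HB.instance Definition _ m := gen_choiceMixin (Jt m).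

Definition jv m (x : Jt m) : A := proj1_sig x.

Lemma Jp0 m : Jp m 0.
Proof. by split=> //; exact: Ipow_0. Qed.
Lemma JpD m a b : Jp m a -> Jp m b -> Jp m (a + b).
Proof.
move=> [ha ha0] [hb hb0]; split; first exact: Ipow_D.
by move=> m0; rewrite ha0 // hb0 // addr0.
Qed.
Lemma JpN m a : Jp m a -> Jp m (- a).
Proof. by move=> [ha ha0]; split; [exact: Ipow_N | move=> m0; rewrite ha0 // oppr0]. Qed.

Lemma jv_inj m (x y : Jt m) : jv x = jv y -> x = y.
Proof. by case: x => x hx; case: y => y hy /= e; apply: eq_exist. Qed.

Definition Jzero m : Jt m := exist _ 0 (Jp0 m).
Definition Jadd m (x y : Jt m) : Jt m := exist _ (jv x + jv y) (JpD (proj2_sig x) (proj2_sig y)).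
Definition Jopp m (x : Jt m) : Jt m := exist _ (- jv x) (JpN (proj2_sig x)).

Lemma JaddA m : associative (@Jadd m).
Proof. by move=> x y z; apply: jv_inj; rewrite /= addrA. Qed.
Lemma JaddC m : commutative (@Jadd m).
Proof. by move=> x y; apply: jv_inj; rewrite /= addrC. Qed.
Lemma Jadd0 m : left_id (Jzero m) (@Jadd m).
Proof. by move=> x; apply: jv_inj; rewrite /= add0r. Qed.
Lemma JaddN m : left_inverse (Jzero m) (@Jopp m) (@Jadd m).
Proof. by move=> x; apply: jv_inj; rewrite /= addNr. Qed.

HB.instance Definition _ m := GRing.isZmodule.Build (Jt m) (@JaddA m) (@JaddC m) (@Jadd0 m) (@JaddN m).

Lemma jvD m (x y : Jt m) : jv (x + y) = jv x + jv y. Proof. by []. Qed.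
Lemma jv0 m : jv (0 : Jt m) = 0. Proof. by []. Qed.
Lemma jvN m (x : Jt m) : jv (- x) = - jv x. Proof. by []. Qed.
Lemma jvP m (x : Jt m) : Jp m (jv x). Proof. exact: proj2_sig. Qed.

Definition toJ m (a : A) : Jt m :=
  match pselect (Jp m a) with left h => exist _ a h | right _ => 0 end.

Lemma toJE m a : Jp m a -> jv (toJ m a) = a.
Proof. by rewrite /toJ; case: pselect. Qed.
Lemma jvK m (x : Jt m) : toJ m (jv x) = x.
Proof. by apply: jv_inj; rewrite toJE //; exact: jvP. Qed.
Lemma toJ0 m : toJ m 0 = 0.
Proof. by apply: jv_inj; rewrite toJE //; exact: Jp0. Qed.
Lemma toJD m a b : Jp m a -> Jp m b -> toJ m (a + b) = toJ m a + toJ m b.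
Proof. by move=> ha hb; apply: jv_inj; rewrite jvD !toJE //; exact: JpD. Qed.
End JDef.

Section JL.
Variables (A : pzRingType) (I : A -> Prop) (hI : two_sided_ideal I).
Lemma Jp_mull m r x : Jp I m x -> Jp I m (r * x).
Proof.
move=> [hx hx0]; case: m hx hx0 => [|m] hx hx0.
  by rewrite hx0 // mulr0; exact: Jp0.
split=> //; exact: Ipow_mull.
Qed.
Lemma Jp_Ipow m a : (0 < m)%N -> Ipow I m a -> Jp I m a.
Proof. by move=> m0 h; split=> // e; rewrite e in m0. Qed.
Lemma Jp_Mz m a z : Jp I m a -> Jp I m (a *~ z).
Proof.
move=> [h h0]; split; first exact: Ipow_Mz.
by move=> e; rewrite h0 // mul0rz.
Qed.
Lemma Jp_mono k m a : (0 < m)%N -> (m <= k)%N -> Jp I k a -> Jp I m a.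
Proof. by move=> m0 mk [h _]; apply: Jp_Ipow => //; exact: Ipow_mono h. Qed.
Lemma Jp_Ip m a : Jp I m a -> Ipow I m a.
Proof. by case. Qed.
End JL.

Unset Implicit Arguments. Set Strict Implicit.

Lemma padd_Mz (A : zmodType) (N : zmodType) (P : A -> Prop) (f : A -> N) :
  P 0 -> (forall a b, P a -> P b -> P (a + b)) -> (forall a, P a -> P (- a)) ->
  (forall a b, P a -> P b -> f (a + b) = f a + f b) ->
  forall a z, P a -> f (a *~ z) = f a *~ z.
Proof.
move=> P0 PD PN fD a z Pa.
have PMn n : P (a *+ n).
  by elim: n => [|n IH]; rewrite ?mulr0n // mulrS; apply: PD.
have f0 : f 0 = 0 by apply: add_id0; rewrite -fD // addr0.
have fMn n : f (a *+ n) = f a *+ n.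
  by elim: n => [|n IH]; rewrite ?mulr0n ?f0 // !mulrS fD // IH.
case: z => n; first exact: fMn.
rewrite NegzE !mulrNz -!pmulrn -fMn.
apply/eqP; rewrite -subr_eq0 opprK -fD ?addNr ?f0 //; exact: PN.
Qed.

Set Implicit Arguments. Unset Strict Implicit.
Section MProps.
Variables (A : pzRingType) (I : A -> Prop) (hI : two_sided_ideal I).
Variables (M : promod A) (hM : is_promod I M).

Lemma ptr_add k m : (0 < m)%N -> (m <= k)%N -> additive_map (PTR M k m).
Proof. by case: hM => h _ _ _ _; apply: h. Qed.
Lemma ptr_id m x : (0 < m)%N -> PTR M m m x = x.
Proof. by case: hM => _ h _ _ _; apply: h. Qed.
Lemma ptr_comp l k m x : (0 < m)%N -> (m <= k)%N -> (k <= l)%N ->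
  PTR M k m (PTR M l k x) = PTR M l m x.
Proof. by case: hM => _ _ h _ _; apply: h. Qed.
Lemma pact_addx m a : (0 < m)%N -> Ipow I m a -> additive_map (PACT M m a).
Proof. by case: hM => _ _ _ h _ m0 ha x y; case: (h m a a x y m0 ha ha). Qed.
Lemma pact_adda m a b x : (0 < m)%N -> Ipow I m a -> Ipow I m b ->
  PACT M m (a + b) x = PACT M m a x + PACT M m b x.
Proof. by case: hM => _ _ _ h _ m0 ha hb; case: (h m a b x x m0 ha hb). Qed.
Lemma pact_mul m a b x : (0 < m)%N -> Ipow I m a -> Ipow I m b ->
  PACT M m (a * b) x = PACT M m a (PACT M m b x).
Proof. by case: hM => _ _ _ h _ m0 ha hb; case: (h m a b x x m0 ha hb). Qed.
Lemma ptr_pact k m a x : (0 < m)%N -> (m <= k)%N -> Ipow I k a ->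
  PTR M k m (PACT M k a x) = PACT M m a (PTR M k m x).
Proof. by case: hM => _ _ _ _ h; apply: h. Qed.
Lemma pact0a m x : (0 < m)%N -> PACT M m 0 x = 0.
Proof.
move=> m0; apply: add_id0; rewrite -pact_adda ?addr0 //; exact: Ipow_0.
Qed.
Lemma pact_Mz m a z x : (0 < m)%N -> Ipow I m a ->
  PACT M m (a *~ z) x = PACT M m a x *~ z.
Proof.
move=> m0 ha; apply: (@padd_Mz _ _ (Ipow I m) (fun b => PACT M m b x)) => //.
- exact: Ipow_0.
- by move=> ? ?; apply: Ipow_D.
- by move=> ?; apply: Ipow_N.
- by move=> b c hb hc; apply: pact_adda.
Qed.
End MProps.
Unset Implicit Arguments. Set Strict Implicit.

Section Cover.
Variables (A : pzRingType) (I : A -> Prop) (hI : two_sided_ideal I).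
Variables (M : promod A) (T : nat -> Type) (tr : forall k m, T k -> T m)
  (io : forall m, T m -> pobj M m).

Local Notation CK m := (classicType (T m)).
Definition CO m := {malg (Jt I m)[CK m]}.
Definition cptr k m (f : CO k) : CO m :=
  mlift (fun (s : CK k) c => << toJ I m (jv c) *g (tr k m s : CK m) >>) f.
Definition cact m (a : A) (f : CO m) : CO m :=
  mlift (fun (s : CK m) c => << toJ I m (a * jv c) *g s >>) f.
Definition Cover : promod A := @Promod A (fun m => CO m) cptr cact.

Definition CL m := {malg int[CK m]}.
Definition cbeta m (a : A) (x : CL m) : CO m :=
  mlift (fun (s : CK m) (z : int) => << toJ I m (a *~ z) *g s >>) x.
Definition csig k m (x : CL k) : CL m :=
  mlift (fun (s : CK k) (z : int) => << z *g (tr k m s : CK m) >>) x.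
Definition Cpf : pfstruct Cover := @PFStruct A Cover (fun m => CL m) cbeta csig.

Definition cmap m (f : CO m) : pobj M m :=
  mlift (fun (s : CK m) c => PACT M m (jv c) (io m s)) f.
Definition cg m (x : CL m) : pobj M m :=
  mlift (fun (s : CK m) (z : int) => io m s *~ z) x.


Lemma cptrU k m c s : cptr k m << c *g s >> = << toJ I m (jv c) *g (tr k m s : CK m) >>.
Proof. by rewrite /cptr mliftU // jv0 toJ0 monalgU0. Qed.

Lemma cptr_add k m : (0 < m)%N -> (m <= k)%N -> additive_map (cptr k m).
Proof.
move=> m0 mk; apply: mliftD => s x y.
rewrite jvD toJD ?monalgUD //; apply: (Jp_mono hI m0 mk); exact: jvP.
Qed.

Lemma cactU m a c s : cact m a << c *g s >> = << toJ I m (a * jv c) *g s >>.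
Proof. by rewrite /cact mliftU // jv0 mulr0 toJ0 monalgU0. Qed.

Lemma cact_add m a : additive_map (cact m a).
Proof.
apply: mliftD => s x y.
by rewrite jvD mulrDr toJD ?monalgUD //; apply: Jp_mull => //; exact: jvP.
Qed.

Lemma cover_promod :
  (forall m s, (0 < m)%N -> tr m m s = s) ->
  (forall l k m s, (0 < m)%N -> (m <= k)%N -> (k <= l)%N ->
      tr k m (tr l k s) = tr l m s) ->
  is_promod I Cover.
Proof.
move=> trid trc; split.
- exact: cptr_add.
- move=> m x m0 /=; rewrite -[RHS]mlift_id; apply: mlift_eq => s c.
  by rewrite jvK trid.
- move=> l k m x m0 mk kl /=.
  rewrite (mlift_comp _ _ (cptr_add k m m0 mk)); apply: mlift_eq => s c.
  rewrite cptrU toJE ?trc //; apply: (Jp_mono hI (leq_trans m0 mk) kl); exact: jvP.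
- move=> m a b x y m0 ha hb /=; split.
  + exact: cact_add.
  + rewrite -mlift_addF; apply: mlift_eq => s c.
    rewrite mulrDl toJD ?monalgUD //; apply: Jp_mull => //; exact: jvP.
  + rewrite (mlift_comp _ _ (cact_add m a)); apply: mlift_eq => s c.
    rewrite cactU toJE ?mulrA //; apply: Jp_mull => //; exact: jvP.
- move=> k m a x m0 mk ha /=.
  rewrite (mlift_comp _ _ (cptr_add k m m0 mk)) (mlift_comp _ _ (cact_add m a)).
  apply: mlift_eq => s c; rewrite /= cptrU cactU !toJE //.
  + apply: (Jp_mono hI m0 mk); exact: jvP.
  + apply: Jp_mull => //; exact: jvP.
Qed.

Lemma cbetaU m a z s : cbeta m a << z *g s >> = << toJ I m (a *~ z) *g s >>.
Proof. by rewrite /cbeta mliftU // mulr0z toJ0 monalgU0. Qed.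

Lemma cbeta_add m a : Jp I m a -> additive_map (cbeta m a).
Proof.
move=> ha; apply: mliftD => s x y.
by rewrite mulrzDr toJD ?monalgUD //; apply: Jp_Mz.
Qed.

Lemma csigU k m z s : csig k m << z *g s >> = << z *g (tr k m s : CK m) >>.
Proof. by rewrite /csig mliftU // monalgU0. Qed.

Lemma csig_add k m : additive_map (csig k m).
Proof. by apply: mliftD => s x y; rewrite monalgUD. Qed.

Lemma CL_free m : free_abelian (CL m).
Proof.
exists (CK m), (fun s => << (1 : int) *g s >>); split.
- move=> x; exists (msupp x : seq _), (fun s => x@_s).
  rewrite {1}(monalgE x); apply: eq_bigr => s _.
  by rewrite -raddfMz intz.
- move=> s c us h b bs.
  have h' : \sum_(b' <- s) << c b' *g b' >> = 0.
    by rewrite -[RHS]h; apply: eq_bigr => b' _; rewrite -raddfMz intz.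
  have := congr1 (mcoeff b) h'.
  rewrite raddf_sum mcoeff0 (bigD1_seq b) //= big1 ?addr0.
    by rewrite mcoeffU eqxx mulr1n.
  move=> b' nb; rewrite mcoeffU.
  by rewrite (negbTE nb) mulr0n.
Qed.

Lemma cover_pf : is_pfstruct I Cpf.
Proof.
move=> m m0; split.
- exact: CL_free.
- split.
  + split.
    * move=> a b x ha hb; rewrite /= -mlift_addF; apply: mlift_eq => s z.
      by rewrite mulrzDl toJD ?monalgUD //; apply: Jp_Mz; apply: Jp_Ipow.
    * move=> a x y ha; apply: cbeta_add; exact: Jp_Ipow.
  + move=> N h [h1 h2].
    have h0 y : h 0 y = 0.
      by apply: add_id0; rewrite -h1 ?addr0 //; exact: Ipow_0.
    have hMz a z y : Ipow I m a -> h (a *~ z) y = h a y *~ z.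
      move=> ha; apply: (@padd_Mz _ _ (Ipow I m) (fun b => h b y)) => //.
      * exact: Ipow_0.
      * by move=> ? ?; apply: Ipow_D.
      * by move=> ?; apply: Ipow_N.
      * by move=> b c hb hc; apply: h1.
    split.
    * pose phi := mlift (fun (s : CK m) (c : Jt I m) => h (jv c) << (1 : int) *g s >>).
      have phiA : additive_map phi.
        apply: mliftD => s c d; rewrite jvD h1 //; apply: Jp_Ip; exact: jvP.
      exists phi; split => // a x ha.
      have ha2 : additive_map (h a) := fun x y => h2 a x y ha.
      rewrite /= /cbeta (mlift_comp _ _ phiA) (am_decomp _ ha2).
      apply: mlift_eq => s z.
      rewrite /phi mliftU ?jv0 ?h0 // toJE; last by apply: Jp_Mz; apply: Jp_Ipow.
      rewrite hMz //.
      have -> : << z *g s >> = << (1 : int) *g s >> *~ z by rewrite -raddfMz intz.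
      by rewrite (amMz ha2).
    * move=> phi1 phi2 a1 a2 e y.
      rewrite (am_decomp _ a1) (am_decomp _ a2); apply: mlift_eq => s c.
      have -> : << c *g s >> = cbeta m (jv c) << (1 : int) *g s >>.
        by rewrite cbetaU mulr1z jvK.
      apply: e; apply: Jp_Ip; exact: jvP.
- move=> a b x ha hb /=.
  rewrite /cbeta (mlift_comp _ _ (cact_add m a)); apply: mlift_eq => s z.
  rewrite cactU toJE ?mulrzAr //; apply: Jp_Mz; exact: Jp_Ipow.
- move=> k mk; exact: csig_add.
- move=> k a x mk ha /=.
  have hm : Jp I m a by apply: Jp_Ipow => //; exact: Ipow_mono ha.
  rewrite /csig (mlift_comp _ _ (cbeta_add m a hm)).
  rewrite {1}/cbeta (mlift_comp _ _ (cptr_add k m m0 mk)); apply: mlift_eq => s z.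
  rewrite cptrU /= cbetaU toJE //; apply: Jp_Mz; apply: Jp_Ipow => //.
  exact: leq_trans m0 mk.
Qed.

Section CoverMap.
Variables (hM : is_promod I M).

Lemma cmapU m c s : (0 < m)%N -> cmap m << c *g s >> = PACT M m (jv c) (io m s).
Proof. by move=> m0; rewrite /cmap mliftU // jv0 (pact0a hM). Qed.

Lemma cmap_add m : (0 < m)%N -> additive_map (cmap m).
Proof.
move=> m0; apply: mliftD => s x y.
by rewrite jvD (pact_adda hM) //; apply: Jp_Ip; exact: jvP.
Qed.

Lemma cgU m z s : cg m << z *g s >> = io m s *~ z.
Proof. by rewrite /cg mliftU // mulr0z. Qed.

Lemma cg_add m : additive_map (cg m).
Proof. by apply: mliftD => s x y; rewrite mulrzDr. Qed.

Hypothesis iotr : forall k m s, (0 < m)%N -> (m <= k)%N ->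
  io m (tr k m s) = PTR M k m (io k s).

Lemma cmap_hom : @is_hom A I Cover M cmap.
Proof.
split.
- exact: cmap_add.
- move=> m a x m0 ha /=.
  rewrite /cact (mlift_comp _ _ (cmap_add m m0)).
  rewrite /cmap (mlift_comp _ _ (pact_addx hM m0 ha)); apply: mlift_eq => s c.
  rewrite -/(cmap m _) cmapU // toJE; last by apply: Jp_mull => //; exact: jvP.
  apply: (pact_mul hM) => //; apply: Jp_Ip; exact: jvP.
- move=> k m x m0 mk /=.
  rewrite /cptr (mlift_comp _ _ (cmap_add m m0)).
  rewrite /cmap (mlift_comp _ _ (ptr_add hM m0 mk)); apply: mlift_eq => s c.
  rewrite -/(cmap m _) cmapU // toJE; last first.
    by apply: (Jp_mono hI m0 mk); exact: jvP.
  rewrite (ptr_pact hM) // ?iotr //; apply: Jp_Ip; exact: jvP.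
Qed.

Lemma cg_ptr k m x : (0 < m)%N -> (m <= k)%N ->
  PTR M k m (cg k x) = cg m (csig k m x).
Proof.
move=> m0 mk.
rewrite /csig (mlift_comp _ _ (cg_add m)).
rewrite {1}/cg (mlift_comp _ _ (ptr_add hM m0 mk)); apply: mlift_eq => s z.
by rewrite cgU (amMz (ptr_add hM m0 mk)) iotr.
Qed.

Lemma cmap_beta m a x : (0 < m)%N -> Ipow I m a ->
  cmap m (cbeta m a x) = PACT M m a (cg m x).
Proof.
move=> m0 ha.
rewrite /cbeta (mlift_comp _ _ (cmap_add m m0)).
rewrite /cg (mlift_comp _ _ (pact_addx hM m0 ha)); apply: mlift_eq => s z.
rewrite -/(cmap m _) cmapU // toJE; last by apply: Jp_Mz; exact: Jp_Ipow.
by rewrite (pact_Mz hM) // (amMz (pact_addx hM m0 ha)).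
Qed.

Lemma cmap_special : special I Cpf cmap.
Proof.
exists cg; split.
- move=> m _; exact: cg_add.
- move=> k m x m0 mk /=; exact: cg_ptr.
- move=> m a x m0 ha /=; exact: cmap_beta.
Qed.
End CoverMap.
End Cover.

Set Implicit Arguments. Unset Strict Implicit.

Lemma fst_add (U V : zmodType) : additive_map (fun p : U * V => p.1).
Proof. by []. Qed.
Lemma snd_add (U V : zmodType) : additive_map (fun p : U * V => p.2).
Proof. by []. Qed.

Lemma pairD (U V : zmodType) (a b : U) (c d : V) : (a, c) + (b, d) = (a + b, c + d).
Proof. by []. Qed.

Section FreeProd.
Variables (L1 L2 : zmodType).

Definition getl (B1 B2 : Type) (b : B1 + B2) : option B1 :=
  if b is inl x then Some x else None.
Definition getr (B1 B2 : Type) (b : B1 + B2) : option B2 :=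
  if b is inr x then Some x else None.

Lemma free_prod : free_abelian L1 -> free_abelian L2 -> free_abelian (L1 * L2)%type.
Proof.
move=> [B1 [e1 [sp1 ind1]]] [B2 [e2 [sp2 ind2]]].
pose e (b : (B1 + B2)%type) : L1 * L2 :=
  match b with inl b1 => (e1 b1, 0) | inr b2 => (0, e2 b2) end.
exists ((B1 + B2)%type : eqType), e; split.
- move=> [x1 x2].
  have [s1 [c1 ->]] := sp1 x1; have [s2 [c2 ->]] := sp2 x2.
  exists (map inl s1 ++ map inr s2),
    (fun b => match b with inl b1 => c1 b1 | inr b2 => c2 b2 end).
  rewrite big_cat !big_map /=.
  rewrite [RHS]surjective_pairing; congr pair.
  + rewrite (@fst_add L1 L2) !(am_sum (@fst_add L1 L2)) /=.
    rewrite [X in _ + X]big1 ?addr0; last by move=> b _; rewrite (amMz (@fst_add _ _)) mul0rz.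
    by apply: eq_bigr => b _; rewrite (amMz (@fst_add _ _)).
  + rewrite (@snd_add L1 L2) !(am_sum (@snd_add L1 L2)) /=.
    rewrite [X in X + _]big1 ?add0r; last by move=> b _; rewrite (amMz (@snd_add _ _)) mul0rz.
    by apply: eq_bigr => b _; rewrite (amMz (@snd_add _ _)).
- move=> s c us h b bs.
  have h1 : \sum_(b1 <- pmap (@getl _ _) s) e1 b1 *~ c (inl b1) = 0.
    have := congr1 fst h; rewrite (am_sum (@fst_add L1 L2)) /= => h'; rewrite -[RHS]h'.
    elim: (s) => [|b' s' IH]; first by rewrite !big_nil.
    rewrite big_cons (amMz (@fst_add _ _)); case: b' => [b1|b2] /=.
      by rewrite big_cons IH.
    by rewrite IH mul0rz add0r.
  have h2 : \sum_(b2 <- pmap (@getr _ _) s) e2 b2 *~ c (inr b2) = 0.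
    have := congr1 snd h; rewrite (am_sum (@snd_add L1 L2)) /= => h'; rewrite -[RHS]h'.
    elim: (s) => [|b' s' IH]; first by rewrite !big_nil.
    rewrite big_cons (amMz (@snd_add _ _)); case: b' => [b1|b2] /=.
      by rewrite IH mul0rz add0r.
    by rewrite big_cons IH.
  case: b bs => [b1|b2] bs.
  + apply: (ind1 (pmap (@getl _ _) s) (fun b1 => c (inl b1)) _ h1).
      by apply: (pmap_uniq (g := inl)) => //; case.
    elim: (s) bs => [|b' s' IH] //; rewrite inE => /orP [/eqP <-|/IH].
      by rewrite /= inE eqxx.
    by case: b' => [x|x] /= hx; rewrite ?inE hx ?orbT.
  + apply: (ind2 (pmap (@getr _ _) s) (fun b2 => c (inr b2)) _ h2).
      by apply: (pmap_uniq (g := inr)) => //; case.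
    elim: (s) bs => [|b' s' IH] //; rewrite inE => /orP [/eqP <-|/IH].
      by rewrite /= inE eqxx.
    by case: b' => [x|x] /= hx; rewrite ?inE hx ?orbT.
Qed.
End FreeProd.

Section TensorProd.
Variables (A : pzRingType) (J : A -> Prop) (L1 L2 P1 P2 : zmodType)
  (b1 : A -> L1 -> P1) (b2 : A -> L2 -> P2).

Lemma tensor_prod : is_tensor J b1 -> is_tensor J b2 ->
  is_tensor J (fun a (x : L1 * L2) => (b1 a x.1, b2 a x.2) : P1 * P2).
Proof.
move=> [[b1a b1x] U1] [[b2a b2x] U2]; split.
  split.
  - by move=> a b x ha hb; rewrite b1a // b2a.
  - by move=> a x y ha; rewrite /= b1x // b2x.
move=> N h [ha hx].
have hb1 : biadditive J (fun a (u : L1) => h a (u, 0)).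
  split; first by move=> a b x ja jb; apply: ha.
  by move=> a x y ja; rewrite -hx // pairD addr0.
have hb2 : biadditive J (fun a (u : L2) => h a (0, u)).
  split; first by move=> a b x ja jb; apply: ha.
  by move=> a x y ja; rewrite -hx // pairD addr0.
split.
  have [[phi1 [p1a p1e]] _] := U1 N _ hb1.
  have [[phi2 [p2a p2e]] _] := U2 N _ hb2.
  exists (fun p => phi1 p.1 + phi2 p.2); split.
    by move=> x y; rewrite /= p1a p2a addrACA.
  move=> a x ja /=; rewrite p1e // p2e // -hx // pairD addr0 add0r.
  by case: x.
move=> psi1 psi2 pa1 pa2 e [y1 y2].
have -> : (y1, y2) = (y1, 0) + (0, y2) by rewrite pairD addr0 add0r.
rewrite pa1 pa2; congr (_ + _).
- have [_ u] := U1 N _ hb1.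
  apply: (u (fun z => psi1 (z, 0)) (fun z => psi2 (z, 0))).
  * by move=> z w; rewrite -pa1 pairD addr0.
  * by move=> z w; rewrite -pa2 pairD addr0.
  * move=> a x ja.
    have e0 : b2 a 0 = 0 by apply: add_id0; rewrite -b2x ?addr0.
    by have := e a (x, 0) ja; rewrite /= e0.
- have [_ u] := U2 N _ hb2.
  apply: (u (fun z => psi1 (0, z)) (fun z => psi2 (0, z))).
  * by move=> z w; rewrite -pa1 pairD addr0.
  * by move=> z w; rewrite -pa2 pairD addr0.
  * move=> a x ja.
    have e0 : b1 a 0 = 0 by apply: add_id0; rewrite -b1x ?addr0.
    by have := e a (0, x) ja; rewrite /= e0.
Qed.
End TensorProd.

Section SumP.
Variables (A : pzRingType) (I : A -> Prop).
Variables (M1 M2 : promod A).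

Definition SumP : promod A :=
  @Promod A (fun m => (pobj M1 m * pobj M2 m)%type)
    (fun k m x => (PTR M1 k m x.1, PTR M2 k m x.2))
    (fun m a x => (PACT M1 m a x.1, PACT M2 m a x.2)).

Lemma SumP_promod : is_promod I M1 -> is_promod I M2 -> is_promod I SumP.
Proof.
move=> h1 h2; split.
- move=> k m m0 mk x y /=.
  by rewrite (ptr_add h1 m0 mk) (ptr_add h2 m0 mk).
- by move=> m [x1 x2] m0 /=; rewrite (ptr_id h1) // (ptr_id h2).
- by move=> l k m [x1 x2] m0 mk kl /=; rewrite (ptr_comp h1) // (ptr_comp h2).
- move=> m a b x y m0 ha hb; split => /=.
  + by rewrite (pact_addx h1 m0 ha) (pact_addx h2 m0 ha).
  + by rewrite (pact_adda h1) // (pact_adda h2).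
  + by rewrite (pact_mul h1) // (pact_mul h2).
- by move=> k m a x m0 mk ha /=; rewrite (ptr_pact h1) // (ptr_pact h2).
Qed.

Variables (S1 : pfstruct M1) (S2 : pfstruct M2).
Definition sumpf : pfstruct SumP :=
  @PFStruct A SumP (fun m => (pfL S1 m * pfL S2 m)%type)
    (fun m a x => (PFB S1 m a x.1, PFB S2 m a x.2))
    (fun k m x => (PFS S1 k m x.1, PFS S2 k m x.2)).

Lemma sumpf_pf : is_pfstruct I S1 -> is_pfstruct I S2 -> is_pfstruct I sumpf.
Proof.
move=> h1 h2 m m0.
have [f1 t1 a1 s1 c1] := h1 m m0; have [f2 t2 a2 s2 c2] := h2 m m0.
split.
- exact: free_prod.
- exact: (tensor_prod t1 t2).
- by move=> a b x ha hb /=; rewrite a1 // a2.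
- by move=> k mk x y /=; rewrite s1 // s2.
- by move=> k a x mk ha /=; rewrite c1 // c2.
Qed.
End SumP.

Set Implicit Arguments. Unset Strict Implicit.

Section Homs.
Variables (A : pzRingType) (I : A -> Prop).

Lemma hom_add (M N : promod A) (hN : is_promod I N) f g :
  is_hom I (M:=M) (N:=N) f -> is_hom I g -> is_hom I (fun m x => f m x + g m x).
Proof.
move=> [fa fp ft] [ga gp gt]; split.
- by move=> m m0 x y; rewrite fa // ga // addrACA.
- by move=> m a x m0 ha; rewrite fp // gp // (pact_addx hN m0 ha).
- by move=> k m x m0 mk; rewrite (ptr_add hN m0 mk) ft // gt.
Qed.

Lemma hom_opp (M N : promod A) (hN : is_promod I N) f :
  is_hom I (M:=M) (N:=N) f -> is_hom I (fun m x => - f m x).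
Proof.
move=> [fa fp ft]; split.
- by move=> m m0 x y; rewrite fa // opprD.
- by move=> m a x m0 ha; rewrite fp // (amN (pact_addx hN m0 ha)).
- by move=> k m x m0 mk; rewrite (amN (ptr_add hN m0 mk)) ft.
Qed.

Lemma hom_mulrn (M N : promod A) (hN : is_promod I N) f n :
  is_hom I (M:=M) (N:=N) f -> is_hom I (fun m x => f m x *+ n).
Proof.
move=> [fa fp ft]; split.
- by move=> m m0 x y; rewrite fa // mulrnDl.
- by move=> m a x m0 ha; rewrite fp // (amMn (pact_addx hN m0 ha)).
- by move=> k m x m0 mk; rewrite (amMn (ptr_add hN m0 mk)) ft.
Qed.

Lemma hom_comp (M N Q : promod A) f g :
  is_hom I (M:=M) (N:=N) f -> is_hom I (M:=N) (N:=Q) g ->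
  is_hom I (fun m x => g m (f m x)).
Proof.
move=> [fa fp ft] [ga gp gt]; split.
- by move=> m m0 x y; rewrite fa // ga.
- by move=> m a x m0 ha; rewrite fp // gp.
- by move=> k m x m0 mk; rewrite gt // ft.
Qed.

Lemma hom_id (M : promod A) : is_hom I (M:=M) (N:=M) (fun m x => x).
Proof. by split. Qed.

Lemma hom_fst (M1 M2 : promod A) :
  is_hom I (M:=SumP M1 M2) (N:=M1) (fun m x => x.1).
Proof. by split. Qed.
Lemma hom_snd (M1 M2 : promod A) :
  is_hom I (M:=SumP M1 M2) (N:=M2) (fun m x => x.2).
Proof. by split. Qed.

Lemma hom_inl (M1 M2 : promod A) (h2 : is_promod I M2) :
  is_hom I (M:=M1) (N:=SumP M1 M2) (fun m x => (x, 0)).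
Proof.
split.
- by move=> m m0 x y; rewrite pairD addr0.
- by move=> m a x m0 ha /=; rewrite (am0 (pact_addx h2 m0 ha)).
- by move=> k m x m0 mk /=; rewrite (am0 (ptr_add h2 m0 mk)).
Qed.
Lemma hom_inr (M1 M2 : promod A) (h1 : is_promod I M1) :
  is_hom I (M:=M2) (N:=SumP M1 M2) (fun m x => (0, x)).
Proof.
split.
- by move=> m m0 x y; rewrite pairD addr0.
- by move=> m a x m0 ha /=; rewrite (am0 (pact_addx h1 m0 ha)).
- by move=> k m x m0 mk /=; rewrite (am0 (ptr_add h1 m0 mk)).
Qed.
End Homs.

Unset Implicit Arguments.
Section Stages.
Variables (A : pzRingType) (I : A -> Prop) (hI : two_sided_ideal I) (n : nat).

Record Stage := mkStage {
  Sprev : promod A;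
  Scur : promod A;
  Sd : forall m, pobj Scur m -> pobj Sprev m;
  Schi : forall m, pobj Scur m -> pobj Scur m;
  Spf : pfstruct Scur }.

Definition KT (s : Stage) (m : nat) : Type :=
  {x : pobj (Scur s) m | Sd s m x = Sd s m 0}.

Definition ktr (s : Stage) k m (x : KT s k) : KT s m :=
  match pselect (Sd s m (PTR (Scur s) k m (proj1_sig x)) = Sd s m 0) with
  | left h => exist _ _ h
  | right _ => exist _ 0 erefl
  end.

Definition kio (s : Stage) m (x : KT s m) : pobj (Scur s) m := proj1_sig x.

Definition Gcov (s : Stage) : promod A := Cover A I (KT s) (ktr s).

Definition nd (s : Stage) m (p : pobj (SumP (Gcov s) (Scur s)) m) : pobj (Scur s) m :=
  cmap A I (Scur s) (KT s) (kio s) m p.1 + Schi s m p.2.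

Definition nchi (s : Stage) m (p : pobj (SumP (Gcov s) (Scur s)) m) :
  pobj (SumP (Gcov s) (Scur s)) m :=
  p *+ n - ((0 : pobj (Gcov s) m), nd s m p).

Definition next (s : Stage) : Stage :=
  @mkStage (Scur s) (SumP (Gcov s) (Scur s)) (nd s) (nchi s)
    (sumpf (Cpf A I (KT s) (ktr s)) (Spf s)).

Definition init (P : promod A) (SP : pfstruct P) : Stage :=
  @mkStage P P (fun m _ => 0) (fun m x => x *+ n) SP.

Fixpoint stage (P : promod A) (SP : pfstruct P) (q : nat) : Stage :=
  match q with
  | 0 => next (init P SP)
  | q.+1 => next (stage P SP q)
  end.

Definition Inv (s : Stage) : Prop :=
  [/\ is_promod I (Sprev s), is_promod I (Scur s),
      is_hom I (M:=Scur s) (N:=Sprev s) (Sd s),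
      is_hom I (M:=Scur s) (N:=Scur s) (Schi s) &
      [/\ is_pfstruct I (Spf s),
          (forall m x, (0 < m)%N -> Sd s m (Schi s m x) = 0) &
          (forall m x, (0 < m)%N -> Sd s m x = 0 -> Schi s m x = x *+ n)]].


Section InvL.
Variable (s : Stage) (hs : Inv s).

Let hprev : is_promod I (Sprev s). Proof. by case: hs. Qed.
Let hcur : is_promod I (Scur s). Proof. by case: hs. Qed.
Let hd : is_hom I (M:=Scur s) (N:=Sprev s) (Sd s). Proof. by case: hs. Qed.
Let hchi : is_hom I (M:=Scur s) (N:=Scur s) (Schi s). Proof. by case: hs. Qed.
Let hpf : is_pfstruct I (Spf s). Proof. by case: hs => _ _ _ _ []. Qed.
Let hdchi m x : (0 < m)%N -> Sd s m (Schi s m x) = 0. Proof. by case: hs => _ _ _ _ [] _ h _; apply: h. Qed.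
Let hchin m x : (0 < m)%N -> Sd s m x = 0 -> Schi s m x = x *+ n.
Proof. by case: hs => _ _ _ _ [] _ _ h; apply: h. Qed.

Lemma Sd_add m : (0 < m)%N -> additive_map (Sd s m).
Proof. by case: hd => h _ _; apply: h. Qed.
Lemma Sd0 m : (0 < m)%N -> Sd s m 0 = 0.
Proof. by move=> m0; apply: am0; apply: Sd_add. Qed.

Lemma KT_eq m (x y : KT s m) : proj1_sig x = proj1_sig y -> x = y.
Proof. by case: x => x hx; case: y => y hy /= e; apply: eq_exist. Qed.

Lemma ktr_val k m x : (0 < m)%N -> (m <= k)%N ->
  proj1_sig (ktr s k m x) = PTR (Scur s) k m (proj1_sig x).
Proof.
move=> m0 mk; rewrite /ktr; case: pselect => // nh; exfalso; apply: nh.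
case: hd => _ _ dt.
rewrite -dt // (proj2_sig x) Sd0 ?(leq_trans m0 mk) // (am0 (ptr_add hprev m0 mk)).
by rewrite Sd0.
Qed.

Lemma ktr_id m x : (0 < m)%N -> ktr s m m x = x.
Proof. by move=> m0; apply: KT_eq; rewrite ktr_val // (ptr_id hcur). Qed.

Lemma ktr_comp l k m x : (0 < m)%N -> (m <= k)%N -> (k <= l)%N ->
  ktr s k m (ktr s l k x) = ktr s l m x.
Proof.
move=> m0 mk kl; apply: KT_eq.
have k0 := leq_trans m0 mk.
by rewrite !ktr_val // ?(leq_trans mk kl) // (ptr_comp hcur).
Qed.

Lemma kio_tr k m x : (0 < m)%N -> (m <= k)%N ->
  kio s m (ktr s k m x) = PTR (Scur s) k m (kio s k x).
Proof. exact: ktr_val. Qed.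

Lemma Gcov_promod : is_promod I (Gcov s).
Proof. exact: (cover_promod A I hI (KT s) (ktr s) (fun m x m0 => ktr_id m x m0) (fun l k m x => ktr_comp l k m x)). Qed.

Lemma cmapK_hom : is_hom I (M:=Gcov s) (N:=Scur s) (cmap A I (Scur s) (KT s) (kio s)).
Proof. exact: (cmap_hom A I hI (Scur s) (KT s) (ktr s) (kio s) hcur (fun k m x => kio_tr k m x)). Qed.

Lemma nd_hom : is_hom I (M:=SumP (Gcov s) (Scur s)) (N:=Scur s) (nd s).
Proof.
exact: (hom_add hcur (hom_comp (@hom_fst _ I _ _) cmapK_hom) (hom_comp (@hom_snd _ I _ _) hchi)).
Qed.

Lemma cmap_in_ker m f : (0 < m)%N -> Sd s m (cmap A I (Scur s) (KT s) (kio s) m f) = 0.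
Proof.
move=> m0; rewrite /cmap (mlift_comp _ _ (Sd_add m m0)) /mlift big1 // => k _.
case: hd => _ dp _.
rewrite dp //; last by apply: Jp_Ip; exact: jvP.
rewrite /kio (proj2_sig k) Sd0 //.
apply: am0; apply: (pact_addx hprev m0); apply: Jp_Ip; exact: jvP.
Qed.

Lemma dd m x : (0 < m)%N -> Sd s m (nd s m x) = 0.
Proof. by move=> m0; rewrite /nd (Sd_add m m0) cmap_in_ker // hdchi // addr0. Qed.

Lemma next_inv : Inv (next s).
Proof.
have hG := Gcov_promod.
have hS : is_promod I (SumP (Gcov s) (Scur s)) by apply: SumP_promod.
have hnd := nd_hom.
split => //=.
- exact: (hom_add hS (hom_mulrn hS n (@hom_id _ I _)) (hom_opp hS (hom_comp hnd (@hom_inr _ I (Gcov s) (Scur s) hG)))).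
split.
- apply: sumpf_pf => //; exact: (cover_pf A I hI).
- move=> m x m0; rewrite /nchi.
  case: hnd => ha _ _.
  rewrite (ha m m0) (amN (ha m m0)) (amMn (ha m m0)).
  rewrite {2}/nd /= /cmap mlift0 add0r hchin ?dd // subrr //.
- move=> m x m0 e; rewrite /nchi e.
  by have -> : ((0 : pobj (Gcov s) m), (0 : pobj (Scur s) m)) = 0 by []; rewrite subr0.
Qed.

Lemma homol_a m a x : (0 < m)%N -> Ipow I m a -> Sd s m x = 0 ->
  exists z, PACT (Scur s) m a x = Sd (next s) m z.
Proof.
move=> m0 ha e.
have e' : Sd s m x = Sd s m 0 by rewrite e Sd0.
exists (<< toJ I m a *g (exist _ x e' : boolp.classicType (KT s m)) >>, 0).
rewrite /= /nd /= (cmapU A I (Scur s) (KT s) (kio s) hcur) // toJE; last exact: Jp_Ipow.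
case: hchi => hc _ _; rewrite (am0 (hc m m0)) addr0 //.
Qed.

Lemma homol_n m x : (0 < m)%N -> Sd s m x = 0 ->
  exists z, x *+ n = Sd (next s) m z.
Proof.
move=> m0 e; exists (0, x).
by rewrite /= /nd /= /cmap mlift0 add0r hchin.
Qed.
End InvL.

Lemma init_inv (P : promod A) (SP : pfstruct P) :
  is_promod I P -> is_pfstruct I SP -> Inv (init P SP).
Proof.
move=> hP hSP; split => //=.
- split.
  + by move=> m m0 x y; rewrite addr0.
  + by move=> m a x m0 ha; rewrite (am0 (pact_addx hP m0 ha)).
  + by move=> k m x m0 mk; rewrite (am0 (ptr_add hP m0 mk)).
- exact: (hom_mulrn hP n (@hom_id _ I _)).
Qed.

Lemma stage_inv (P : promod A) (SP : pfstruct P) q :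
  is_promod I P -> is_pfstruct I SP -> Inv (stage P SP q).
Proof.
move=> hP hSP; elim: q => [|q IH] /=; apply: next_inv => //.
exact: init_inv.
Qed.
End Stages.

Unset Implicit Arguments. Set Strict Implicit.

Section Main.
Variables (A : pzRingType) (I : A -> Prop) (hI : two_sided_ideal I).
Variables (P : promod A) (SP : pfstruct P) (hP : is_promod I P) (hSP : is_pfstruct I SP).
Variable (n : nat).

Let st q := stage A I n P SP q.
Let C q := Scur A (st q).
Let d : forall q m, pobj (C q.+1) m -> pobj (C q) m := fun q m => Sd A (st q.+1) m.
Let eps : forall m, pobj (C 0) m -> pobj P m := fun m => Sd A (st 0) m.
Let inv q : Inv A I n (st q) := stage_inv A I hI n P SP q hP hSP.
Let inv0 : Inv A I n (init A n P SP) := init_inv A I n P SP hP hSP.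

Lemma main_aug : aug_complex I d eps.
Proof.
split.
- by move=> q; case: (inv q).
- by move=> q; case: (inv q.+1).
- by case: (inv 0).
- by move=> q m x m0; apply: (dd A I n _ (inv q.+1)).
- by move=> m x m0; apply: (dd A I n _ (inv 0)).
Qed.

Lemma main_pf q : is_pfstruct I (Spf A (st q)).
Proof. by case: (inv q) => _ _ _ _ []. Qed.

Lemma main_homol_a m a : (0 < m)%N -> Ipow I m a ->
  homology_killed_by d eps (fun M m x y => PACT M m a x = y) m.
Proof.
move=> m0 ha; split.
- by move=> y; apply: (homol_a A I n _ inv0 m a y m0 ha).
- by move=> x e; apply: (homol_a A I n _ (inv 0) m a x m0 ha).
- by move=> q x e; apply: (homol_a A I n _ (inv q.+1) m a x m0 ha).
Qed.

Lemma main_homol_n m : (0 < m)%N ->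
  homology_killed_by d eps (fun M m x y => x *+ n = y) m.
Proof.
move=> m0; split.
- by move=> y; apply: (homol_n A I n _ inv0 m y m0).
- by move=> x e; apply: (homol_n A I n _ (inv 0) m x m0).
- by move=> q x e; apply: (homol_n A I n _ (inv q.+1) m x m0).
Qed.

End Main.

Section Final.
Variables (A : pzRingType) (I : A -> Prop) (hI : two_sided_ideal I).
Variables (P : promod A) (SP : pfstruct P) (hP : is_promod I P) (hSP : is_pfstruct I SP).

Lemma main_special :
  special I (Spf A (stage A I 0 P SP 0)) (fun m => Sd A (stage A I 0 P SP 0) m).
Proof.
pose s0 := init A 0 P SP.
have hs0 : Inv A I 0 s0 := init_inv A I 0 P SP hP hSP.
exists (fun m l => cg A P (KT A s0) (kio A s0) m l.1); split.
- by move=> m _ x y; apply: cg_add.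
- move=> k m x m0 mk.
  exact: (cg_ptr A I P (KT A s0) (ktr A s0) (kio A s0) hP (kio_tr A I 0 s0 hs0) k m x.1 m0 mk).
- move=> m a x m0 ha /=; rewrite /nd /= mulr0n addr0.
  exact: (cmap_beta A I P (KT A s0) (kio A s0) hP).
Qed.

Lemma main_pv n : pv_special I n (fun m => Sd A (stage A I n P SP 0) m).
Proof.
pose s0 := init A n P SP.
have hs0 : Inv A I n s0 := init_inv A I n P SP hP hSP.
have hG := Gcov_promod A I hI n s0 hs0.
exists (Gcov A I s0), P, (fun m f => (f, 0)), (fun m y => (0, y)),
  (Cpf A I (KT A s0) (ktr A s0)), SP.
split.
- split => //; [exact: (hom_inl (Gcov A I s0) hP) | exact: (@hom_inr _ I (Gcov A I s0) P hG)].
- move=> m m0; exists (fun p => (p.1, p.2)) => [[x y]|[x y]] /=; congr pair; [exact: addr0 | exact: add0r | exact: addr0 | exact: add0r].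
- by split => //; apply: cover_pf.
- exists (fun m l => cg A P (KT A s0) (kio A s0) m l); split.
  + by move=> m _ x y; apply: cg_add.
  + move=> k m x m0 mk.
    exact: (cg_ptr A I P (KT A s0) (ktr A s0) (kio A s0) hP (kio_tr A I n s0 hs0) k m x m0 mk).
  + move=> m a x m0 ha /=; rewrite /nd /= mul0rn addr0.
    exact: (cmap_beta A I P (KT A s0) (kio A s0) hP).
- exists (fun m x => x); split; first exact: hom_id.
  by move=> m x m0; rewrite /= /nd /= /cmap mlift0 add0r.
Qed.
End Final.

Unset Implicit Arguments. Set Strict Implicit.
Local Close Scope ring_scope.

Theorem corollary1p5 (A : pzRingType) (I : A -> Prop) (p v : nat)
  (P : promod A) :
  two_sided_ideal I -> prime p -> (0 < v)%N ->
  is_promod I P -> pseudo_free I P ->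
  special_complex I P /\ pv_special_complex I (p ^ v) P.
Proof.
move=> hI _ _ hP [SP hSP]; split.
- exists (fun q => Scur A (stage A I 0 P SP q)),
    (fun q m => Sd A (stage A I 0 P SP q.+1) m),
    (fun m => Sd A (stage A I 0 P SP 0) m),
    (fun q => Spf A (stage A I 0 P SP q)).
  split.
  + exact: main_aug.
  + exact: main_pf.
  + exact: main_special.
  + move=> m m0 a ha; exact: main_homol_a.
- exists (fun q => Scur A (stage A I (p ^ v) P SP q)),
    (fun q m => Sd A (stage A I (p ^ v) P SP q.+1) m),
    (fun m => Sd A (stage A I (p ^ v) P SP 0) m).
  split.
  + exact: main_aug.
  + move=> q; exists (Spf A (stage A I (p ^ v) P SP q)); exact: main_pf.
  + exact: main_pv.
  + move=> m m0; split; [move=> a ha; exact: main_homol_a | exact: main_homol_n].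
Qed.
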